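(* Let $\gamma:=2\Delta\lambda\max\{\lambda,\mu\}$, $\beta:=(4\Delta\lambda\gamma)^d$ and $\epsilon>0$. For every $v\in V$ let $\mathfrak a'_v:\mathbb R\to\mathbb R$ be an $\epsilon$-approximation of $\mathfrak a_v$ that is Lipschitz continuous with constant $2\lambda$, and let $\mathfrak A':=(V,E,(\mathfrak a'_v)_{v\in V})$. Then for all $\mathbf x\in\mathbb R^p$, $\mathbf b\in\mathbb R^V$ and $\mathbf w\in\mathbb R^E$, $$\|\mathfrak A(\mathbf x,\mathbf w,\mathbf b)-\mathfrak A'(\mathbf x,\mathbf w,\mathbf b)\|_\infty\le\beta(\|\mathbf w\|_\infty+1)^d(\|\mathbf x\|_\infty+\|\mathbf b\|_\infty+1)\epsilon.$$
   Context: $\mathfrak A=(V,E,(\mathfrak a_v)_{v\in V})$ is an FNN architecture: $(V,E)$ is a finite dag and each $\mathfrak a_v:\mathbb R\to\mathbb R$ is Lipschitz continuous. Sources are input nodes $X_1,\dots,X_p$, sinks are output nodes. For an architecture $\mathfrak B$ with activations $\mathfrak b_v$ on the same dag, $f_{\mathfrak B,X_i}(\mathbf x,\mathbf w,\mathbf b)=x_i$ and for non-input $v$, $f_{\mathfrak B,v}(\mathbf x,\mathbf w,\mathbf b)=\mathfrak b_v\big(b_v+\sum_{u:uv\in E}f_{\mathfrak B,u}(\mathbf x,\mathbf w,\mathbf b)w_{uv}\big)$; $\mathfrak B(\mathbf x,\mathbf w,\mathbf b)$ is the tuple of values at the outputs. $d$ is the depth of the dag, $\Delta\ge1$ its maximum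 in-degree, $\lambda\in\mathbb N_{>0}$ a Lipschitz constant of all $\mathfrak a_v$, $\mu=\max_v\lceil|\mathfrak a_v(0)|\rceil$. A function $g$ is an $\epsilon$-approximation of $f$ if $|f(x)-g(x)|\le\epsilon|f(x)|+\epsilon$ for all $x\in\mathbb R$. *)

(* Defs.v *)
From HB Require Import structures.
From mathcomp Require Import all_boot all_order all_algebra.
From mathcomp Require Import reals.
Set Implicit Arguments. Unset Strict Implicit. Unset Printing Implicit Defensive.
Import Order.TTheory GRing.Theory Num.Theory.
Local Open Scope ring_scope.

Section FNN.
Variable R : realType.
Variable V : finType.
Variable E : rel V.

Definition acyclic : Prop :=
  forall (v : V) (s : seq V), path E v s -> s != [::] -> last v s != v.

Definition is_depth (d : nat) : Prop :=
  (forall (v : V) (s : seq V), path E v s -> (size s <= d)%N) /\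
  (exists (v : V) (s : seq V), path E v s /\ size s = d).

Definition maxindeg : nat := \max_(v : V) #|[set u | E u v]|.

Definition is_source (v : V) : bool := [forall u, ~~ E u v].
Definition is_sink (v : V) : bool := [forall u, ~~ E v u].

Definition lipschitz (L : R) (f : R -> R) : Prop :=
  forall x y, `|f x - f y| <= L * `|x - y|.

Definition eps_approx (eps : R) (f g : R -> R) : Prop :=
  forall x, `|f x - g x| <= eps * `|f x| + eps.

Definition mu_of (a : V -> R -> R) : nat :=
  \max_(v : V) absz (Num.ceil `|a v 0%R|).

Definition input_val (p : nat) (X : 'I_p -> V) (x : 'I_p -> R) (v : V) : R :=
  match [pick i | X i == v] with Some i => x i | None => 0 end.

(* f_{B,v}(x,w,b), computed with fuel n; fuel #|V| exceeds the depth of any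
   node of an acyclic graph, so [fnn_eval] is the value of the paper. *)
Fixpoint fnn_eval_fuel (n : nat) (a : V -> R -> R) (xin : V -> R)
    (w : V -> V -> R) (b : V -> R) (v : V) : R :=
  match n with
  | 0 => 0
  | n'.+1 =>
      if is_source v then xin v
      else a v (b v + \sum_(u | E u v) fnn_eval_fuel n' a xin w b u * w u v)
  end.

Definition fnn_eval (p : nat) (X : 'I_p -> V) (a : V -> R -> R)
    (x : 'I_p -> R) (w : V -> V -> R) (b : V -> R) (v : V) : R :=
  fnn_eval_fuel #|V| a (input_val X x) w b v.

Definition norm_inp (p : nat) (x : 'I_p -> R) : R := \big[Num.max/0]_(i < p) `|x i|.
Definition norm_node (b : V -> R) : R := \big[Num.max/0]_(v : V) `|b v|.
Definition norm_edge (w : V -> V -> R) : R :=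
  \big[Num.max/0]_(uv : V * V | E uv.1 uv.2) `|w uv.1 uv.2|.

End FNN.

(* Main.v *)
Require Import Defs.
From HB Require Import structures.
From mathcomp Require Import all_boot all_order all_algebra reals.
Set Implicit Arguments. Unset Strict Implicit.
Import Order.TTheory GRing.Theory Num.Theory.
Local Open Scope ring_scope.

Lemma le_bmax (R : realType) (I : finType) (P : pred I) (F : I -> R) i :
  P i -> F i <= \big[Num.max/0]_(j | P j) F j.
Proof. by move=> Pi; rewrite (bigD1 i) //= le_max lexx. Qed.

Lemma bmax_ge0 (R : realType) (I : finType) (P : pred I) (F : I -> R) :
  0 <= \big[Num.max/0]_(j | P j) F j.
Proof. by elim/big_rec: _ => // i x _ hx; rewrite le_max hx orbT. Qed.

Lemma sum_le_const (R : realType) (I : finType) (P : pred I) (F : I -> R) c :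
  (forall i, P i -> F i <= c) -> \sum_(i | P i) F i <= c *+ #|[set i | P i]|.
Proof.
move=> h; apply: le_trans (ler_sum _ h) _.
by rewrite sumr_const cardsE.
Qed.
From mathcomp Require Import zify ring lra.

Section Bounds.
Variables (R : realType) (V : finType) (E : rel V).
Variables (a a' : V -> R -> R) (xin : V -> R) (w : V -> V -> R) (b : V -> R).
Variables (lam m Dl W Nx Nb eps : R).
Hypotheses (lam1 : 1 <= lam) (lam_m : lam <= m) (Dl1 : 1 <= Dl) (W0 : 0 <= W)
  (Nx0 : 0 <= Nx) (Nb0 : 0 <= Nb).
Hypothesis lipa : forall v, lipschitz lam (a v).
Hypothesis a0 : forall v, `|a v 0| <= m.
Hypothesis hx : forall v, `|xin v| <= Nx.
Hypothesis hb : forall v, `|b v| <= Nb.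
Hypothesis hw : forall u v, E u v -> `|w u v| <= W.
Hypothesis hD : forall v, (#|[set u | E u v]|)%:R <= Dl.

Definition bb v k := forall u s, path E u s -> last u s = v -> (size s <= k)%N.

Lemma bb_pred v k u : bb v k -> E u v -> (0 < k)%N /\ bb u k.-1.
Proof.
move=> h e; split.
  by have := h u [:: v]; rewrite /= e => /(_ erefl erefl).
move=> u' s ps ls.
have := h u' (rcons s v); rewrite rcons_path ps ls e last_rcons size_rcons.
move=> /(_ erefl erefl); lia.
Qed.

Lemma bb0_nopred v u : bb v 0 -> E u v -> False.
Proof. by move=> h e; have [] := bb_pred h e. Qed.

Ltac shyps := move: (lam1) (lam_m) (Dl1) (W0) (Nx0) (Nb0) => ? ? ? ? ? ?.

Let M := Nx + Nb + 1.
Let T := lam * Dl * (W + 1).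

Lemma T1 : 1 <= T.
Proof. rewrite /T; have : 1 <= lam * Dl by shyps; nra. shyps; nra. Qed.

Lemma Tk k : 1 <= T ^+ k.
Proof. by apply: exprn_ege1; exact: T1. Qed.

Lemma lip_bound (f : R -> R) L z : lipschitz L f -> `|f z| <= L * `|z| + `|f 0|.
Proof.
move=> h; have := h z 0; rewrite subr0 => H.
rewrite -[f z](subrK (f 0)).
by apply: le_trans (ler_normD _ _) _; rewrite lerD2r.
Qed.

Lemma val_bound n v k : bb v k ->
  `|fnn_eval_fuel E n a xin w b v| <= m * M * T ^+ k.
Proof.
have hT := Tk k.
have m1 : 1 <= m by apply: le_trans lam_m.
have mM1 : 1 <= m * M by rewrite /M; shyps; nra.
elim: n v k hT => [|n IH] v k hT hv /=.
  by rewrite normr0; shyps; nra.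
case: ifP => _.
  apply: le_trans (hx v) _.
  have : Nx <= m * M by rewrite /M; shyps; nra.
  shyps; nra.
set s := \sum_(u | E u v) _.
apply: le_trans (lip_bound _ (lipa v)) _.
have hz : `|b v + s| <= Nb + `|s| by apply: le_trans (ler_normD _ _) _; rewrite lerD2r.
case: k hT hv => [|k] hT hv.
  have -> : s = 0 by rewrite /s big1 // => u /(bb0_nopred hv).
  rewrite addr0 /M.
  have := hb v; have := a0 v; shyps; nra.
have hs : `|s| <= Dl * W * (m * M * T ^+ k).
  apply: le_trans (ler_norm_sum _ _ _) _.
  apply: le_trans (sum_le_const (c := m * M * T ^+ k * W) _) _.
    move=> u e; rewrite normrM; have [_ hu] := bb_pred hv e.
    apply: ler_pM => //; first exact: IH (Tk _) hu.
    exact: hw.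
  rewrite -mulr_natr.
  have : 0 <= m * M * T ^+ k * W.
    have := Tk k => ?.
    by apply: mulr_ge0 => //; shyps; nra.
  have := hD v; shyps; nra.
have hP := Tk k; have ha := a0 v; rewrite exprS.
set P := T ^+ k in hs hP *.
have h1 : lam * `|b v + s| <= lam * Nb + lam * `|s|.
  by rewrite -mulrDr; apply: ler_wpM2l => //; shyps; lra.
have h2 : lam * `|s| <= lam * (Dl * W * (m * M * P)).
  by apply: ler_wpM2l => //; shyps; lra.
have h3 : lam * Nb + `|a v 0| <= m * M by rewrite /M; shyps; nra.
have hQ : 1 <= lam * Dl * P.
  have : 1 <= lam * Dl by shyps; nra.
  by move=> ?; shyps; nra.
have h4 : m * M <= m * M * (lam * Dl * P) by nra.
have -> : m * M * (T * P) = m * M * (lam * Dl * P) + lam * (Dl * W * (m * M * P)).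
  by rewrite /T; ring.
lra.
Qed.

Hypothesis eps0 : 0 < eps.
Hypothesis appr : forall v, eps_approx eps (a v) (a' v).
Hypothesis lipa' : forall v, lipschitz (2 * lam) (a' v).

Lemma K_ge1 k : 1 <= 2 * (m * M * T ^+ k) * (2 * 2 ^+ k - 1).
Proof.
have m1 : 1 <= m by apply: le_trans lam_m.
have mM1 : 1 <= m * M by rewrite /M; shyps; nra.
have hP := Tk k.
have hQ : 1 <= (2:R) ^+ k by apply: exprn_ege1; lra.
have : 1 <= m * M * T ^+ k by nra.
move: hQ; move: (T ^+ k) ((2:R) ^+ k) => P Q hQ hY; nra.
Qed.

Lemma diff_bound n v k : bb v k ->
  `|fnn_eval_fuel E n a xin w b v - fnn_eval_fuel E n a' xin w b v|
    <= eps * (2 * (m * M * T ^+ k) * (2 * 2 ^+ k - 1)).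
Proof.
have m1 : 1 <= m by apply: le_trans lam_m.
have mM1 : 1 <= m * M by rewrite /M; shyps; nra.
have Kp : forall k, 0 <= eps * (2 * (m * M * T ^+ k) * (2 * 2 ^+ k - 1)).
  move=> j; have := K_ge1 j; have := eps0.
  move: (2 * (m * M * T ^+ j) * (2 * 2 ^+ j - 1)) => K ? ?; nra.
elim: n v k => [|n IH] v k hv /=.
  by rewrite subrr normr0.
case: ifP => hsrc.
  by rewrite subrr normr0.
set s := \sum_(u | E u v) _.
set s' := \sum_(u | E u v) _.
have hval := val_bound n.+1 hv; rewrite /= hsrc -/s in hval.
have -> : a v (b v + s) - a' v (b v + s') =
    (a v (b v + s) - a' v (b v + s)) + (a' v (b v + s) - a' v (b v + s')) by ring.
apply: le_trans (ler_normD _ _) _.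
have hA := appr v (b v + s).
have hL := lipa' v (b v + s) (b v + s').
have hz : b v + s - (b v + s') = \sum_(u | E u v)
    (fnn_eval_fuel E n a xin w b u - fnn_eval_fuel E n a' xin w b u) * w u v.
  by rewrite /s /s' opprD addrACA subrr add0r -sumrB; apply: eq_bigr => u _; rewrite mulrBl.
rewrite hz in hL.
case: k hv hval Kp => [|k] hv hval Kp.
  rewrite big1 ?normr0 ?mulr0 in hL; last by move=> u /(bb0_nopred hv).
  apply: le_trans (lerD (hA) hL) _; rewrite addr0.
  rewrite expr0 !mulr1.
  have : `|a v (b v + s)| <= m * M by rewrite expr0 mulr1 in hval.
  move=> hA'; have := eps0; move: mM1 hA'; move: (m * M) `|a v (b v + s)| => Y A ? ? ?; nra.
have hsum : `|\sum_(u | E u v)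
    (fnn_eval_fuel E n a xin w b u - fnn_eval_fuel E n a' xin w b u) * w u v|
    <= Dl * W * (eps * (2 * (m * M * T ^+ k) * (2 * 2 ^+ k - 1))).
  apply: le_trans (ler_norm_sum _ _ _) _.
  apply: le_trans (sum_le_const (c := eps * (2 * (m * M * T ^+ k) * (2 * 2 ^+ k - 1)) * W) _) _.
    move=> u e; rewrite normrM; have [_ hu] := bb_pred hv e.
    apply: ler_pM => //; first exact: IH hu.
    exact: hw.
  set K := eps * _.
  rewrite -mulr_natr.
  have hKW : 0 <= K * W by apply: mulr_ge0; [exact: Kp | shyps].
  idtac.
  have -> : Dl * W * K = K * W * Dl by ring.
  apply: ler_wpM2l => //; exact: hD.
apply: le_trans (lerD (hA) hL) _.
have hval' : `|a v (b v + s)| <= m * M * T ^+ k.+1 by [].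
have hP := Tk k.
have hQ : 1 <= (2:R) ^+ k by apply: exprn_ege1; lra.
have hY : 1 <= m * M * T ^+ k by nra.
have hT := T1.
rewrite !exprS in hval' *.
rewrite /T in hT hval' *.
have e0 := eps0.
have hlD : 1 <= lam * Dl by shyps; nra.
move: hQ hY hval' hsum hL; move: (T ^+ k) ((2:R) ^+ k) `|a v (b v + s)| => P Q A hQ hY hval' hsum hL.
move: hsum hL mM1 hY hval'; move: `|\sum_(u | E u v) _| (m * M) => S Y hsum hL hY1 hY hval'.
have g0 : 2 * lam * S <= 2 * lam * (Dl * W * (eps * (2 * (Y * P) * (2 * Q - 1)))).
  by apply: ler_wpM2l => //; shyps; lra.
have hZ : 1 <= Y * (lam * Dl * (W + 1) * P).
  have : 1 <= lam * Dl * (W + 1) by shyps; nra.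
  have := hT.
  move=> ?; nra.
have g1 : eps * A + eps <= eps * (2 * (Y * (lam * Dl * (W + 1) * P))).
  move: hZ hval'; move: (Y * _) => Z ? ?; nra.
have g2 : 0 <= eps * (4 * (Y * P) * (lam * Dl) * (2 * Q - 1)).
  apply: mulr_ge0; first lra.
  apply: mulr_ge0; last lra.
  apply: mulr_ge0; last lra.
  apply: mulr_ge0; first lra.
  nra.
have ee : eps * (2 * (Y * (lam * Dl * (W + 1) * P)) * (2 * (2 * Q) - 1)) =
  eps * (2 * (Y * (lam * Dl * (W + 1) * P))) +
  2 * lam * (Dl * W * (eps * (2 * (Y * P) * (2 * Q - 1)))) +
  eps * (4 * (Y * P) * (lam * Dl) * (2 * Q - 1)) by ring.
rewrite ee; lra.
Qed.
End Bounds.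

Theorem lemma6p8 (R : realType) (V : finType) (E : rel V) (p : nat)
    (X : 'I_p -> V) (a a' : V -> R -> R) (d lam : nat) (eps : R) :
  acyclic E ->
  injective X ->
  (forall v, is_source E v <-> exists i, X i = v) ->
  is_depth E d ->
  (1 <= maxindeg E)%N ->
  (0 < lam)%N ->
  (forall v, lipschitz lam%:R (a v)) ->
  0 < eps ->
  (forall v, eps_approx eps (a v) (a' v)) ->
  (forall v, lipschitz (2 * lam%:R) (a' v)) ->
  let gamma := (2 * maxindeg E * lam * maxn lam (mu_of a))%N in
  let beta := ((4 * maxindeg E * lam * gamma) ^ d)%N in
  forall (x : 'I_p -> R) (b : V -> R) (w : V -> V -> R) (v : V),
    is_sink E v ->
    `|fnn_eval E X a x w b v - fnn_eval E X a' x w b v|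
      <= beta%:R * (norm_edge E w + 1) ^+ d
         * (norm_inp x + norm_node b + 1) * eps.
Proof.
move=> _ _ _ [hdep _] hD1 hlam lipa eps0 appr lipa' gamma beta x b w v _.
set mn := maxn lam (mu_of a).
set Dn := maxindeg E.
have lam1 : 1 <= lam%:R :> R by rewrite ler1n.
have lam_m : lam%:R <= mn%:R :> R by rewrite ler_nat leq_maxl.
have Dl1 : 1 <= Dn%:R :> R by rewrite ler1n.
have W0 : 0 <= norm_edge E w by apply: bmax_ge0.
have Nx0 : 0 <= norm_inp x by apply: bmax_ge0.
have Nb0 : 0 <= norm_node b by apply: bmax_ge0.
have a0 : forall v, `|a v 0| <= mn%:R.
  move=> u; apply: le_trans (real_ceil_ge (num_real _)) _.
  have c0 : (0 <= Num.ceil `|a u 0|)%R by rewrite ceil_ge0 (lt_le_trans _ (normr_ge0 _)) ?ltrN10.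
  rewrite -(gez0_abs c0) -natr_absz ler_nat (leq_trans _ (leq_maxr lam _)) //.
  by rewrite /mu_of (leq_bigmax (F := fun v => absz (Num.ceil `|a v 0|)) u).
have hx : forall v, `|input_val X x v| <= norm_inp x.
  move=> u; rewrite /input_val; case: pickP => [i _|_]; last by rewrite normr0.
  exact: (le_bmax (P := fun _ => true)).
have hb : forall v, `|b v| <= norm_node b.
  by move=> u; exact: (le_bmax (P := fun _ => true)).
have hw : forall u v, E u v -> `|w u v| <= norm_edge E w.
  by move=> u u' e; exact: (@le_bmax R _ (fun uv : V * V => E uv.1 uv.2) (fun uv => `|w uv.1 uv.2|) (u, u') e).
have hD : forall v, (#|[set u | E u v]|)%:R <= Dn%:R :> R.
  by move=> u; rewrite ler_nat /Dn /maxindeg (leq_bigmax (F := fun v => #|[set u | E u v]|) u).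
have hv : bb E v d by move=> u s ps _; exact: hdep u s ps.
have := diff_bound lam1 lam_m Dl1 W0 Nx0 Nb0 lipa a0 hx hb hw hD eps0 appr lipa' #|V| hv.
rewrite /fnn_eval => H; apply: le_trans H _.
have d1 : (0 < d)%N.
  case: (posnP d) => [d0|//]; exfalso.
  have noE : forall u u', ~~ E u u'.
    move=> u u'; apply/negP => e; have := hdep u [:: u']; rewrite /= e d0 => /(_ isT).
    by [].
  move: hD1; rewrite /maxindeg big1 // => u _; apply/eqP; rewrite cards_eq0.
  by apply/eqP/setP => y; rewrite !inE (negbTE (noE _ _)).
rewrite /beta /gamma natrX !natrM -/mn -/Dn.
set m := mn%:R; set L := lam%:R; set D := Dn%:R.
set G := norm_edge E w + 1; set Y := norm_inp x + norm_node b + 1.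
have -> : (4 * D * L * (2 * D * L * m)) = (2 * (L * D)) * (4 * (D * L * m)) by ring.
rewrite (exprMn d (L * D)%R G) (exprMn d (2 * (L * D))%R (4 * (D * L * m))%R) (exprMn d 2%R (L * D)%R).
set A := (L * D) ^+ d; set B := (2:R) ^+ d; set Gd := G ^+ d.
set H := (4 * (D * L * m)) ^+ d.
have m0 : 0 <= m by [].
have LD1 : 1 <= D * L by nra.
have hH : 4 * m <= H.
  apply: le_trans (ler_eXnr d1 _); last by nra.
  nra.
have hB : 1 <= B by apply: exprn_ege1; lra.
have hA : 0 <= A by apply: exprn_ge0; nra.
have hG : 0 <= Gd by apply: exprn_ge0; rewrite /G; lra.
have hY : 0 <= Y by rewrite /Y; lra.
have hQ : 0 <= eps * Y * A * Gd.
  apply: mulr_ge0 => //; apply: mulr_ge0 => //; apply: mulr_ge0 => //; lra.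
have -> : eps * (2 * (m * Y * (A * Gd)) * (2 * B - 1)) = (eps * Y * A * Gd) * (2 * m * (2 * B - 1)) by ring.
have -> : B * A * H * Gd * Y * eps = (eps * Y * A * Gd) * (B * H) by ring.
apply: ler_wpM2l => //.
nra.
Qed.
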